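(* Let $\mathcal C$ be the class of structures $\mathbb X=\langle X,\rho\rangle$ with $|X|=\omega$ and $\rho$ an equivalence relation on $X$ such that (C1) infinitely many $\rho$-classes are singletons, and (C2) for each $n\in\omega$ there is a $\rho$-class of size $\ge n$. Let $\mathcal C_{\mathrm{fin}}$ be the set of $\mathbb X\in\mathcal C$ all of whose classes are finite, and $\mathcal C_\omega=\mathcal C\setminus\mathcal C_{\mathrm{fin}}$. Then for all $\mathbb X,\mathbb Y\in\mathcal C$: (a) $\mathbb X\equiv_{\mathcal P}\mathbb Y$; (b) $\mathbb X\preccurlyeq_c\mathbb Y$ iff $\mathbb X\in\mathcal C_{\mathrm{fin}}$ or $\mathbb Y\in\mathcal C_\omega$; (c) $\mathbb X\sim_c\mathbb Y$ iff either both $\mathbb X,\mathbb Y\in\mathcal C_{\mathrm{fin}}$ or both $\mathbb X,\mathbb Y\in\mathcal C_\omega$.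
   Context: The language has one binary relation symbol $R$. A condensation from $\langle X,\rho\rangle$ onto $\langle Y,\sigma\rangle$ is a bijection $F:X\to Y$ with $x\,\rho\,x'\Rightarrow F(x)\,\sigma\,F(x')$; $\mathbb X\preccurlyeq_c\mathbb Y$ means a condensation exists, and $\mathbb X\sim_c\mathbb Y$ means $\mathbb X\preccurlyeq_c\mathbb Y$ and $\mathbb Y\preccurlyeq_c\mathbb X$. $\mathcal P_0$ consists of all atomic formulas ($v_\alpha=v_\beta$, $R(v_\alpha,v_\beta)$) and all $\neg\,v_\alpha=v_\beta$; $\mathcal P$ is the closure of $\mathcal P_0$ under finite conjunctions, finite disjunctions, $\forall v$ and $\exists v$ (no negation). $\mathbb X\equiv_{\mathcal P}\mathbb Y$ means $\mathbb X$ and $\mathbb Y$ satisfy the same sentences of $\mathcal P$. *)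

(* Defs.v *)
From Stdlib Require Import List Classes.RelationClasses.
Import ListNotations.

(* Formulas of the positive fragment P: built from P_0 (atomic formulas
   v_i = v_j, R(v_i,v_j), and negated equalities ~ v_i = v_j) by finite
   conjunctions, finite disjunctions, forall and exists. *)
Inductive pform : Type :=
| PEq  : nat -> nat -> pform
| PR   : nat -> nat -> pform
| PNeq : nat -> nat -> pform
| PAnd : pform -> pform -> pform
| POr  : pform -> pform -> pform
| PAll : nat -> pform -> pform
| PEx  : nat -> pform -> pform.

Definition upd {X : Type} (e : nat -> X) (i : nat) (x : X) : nat -> X :=
  fun j => if Nat.eqb j i then x else e j.

Fixpoint sat {X : Type} (rho : X -> X -> Prop) (e : nat -> X) (f : pform) : Prop :=
  match f with
  | PEq i j => e i = e j
  | PR i j => rho (e i) (e j)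
  | PNeq i j => e i <> e j
  | PAnd f g => sat rho e f /\ sat rho e g
  | POr f g => sat rho e f \/ sat rho e g
  | PAll i f => forall x : X, sat rho (upd e i x) f
  | PEx i f => exists x : X, sat rho (upd e i x) f
  end.

Fixpoint free_in (k : nat) (f : pform) : Prop :=
  match f with
  | PEq i j | PR i j | PNeq i j => k = i \/ k = j
  | PAnd f g | POr f g => free_in k f \/ free_in k g
  | PAll i f | PEx i f => k <> i /\ free_in k f
  end.

Definition sentence (f : pform) : Prop := forall k, ~ free_in k f.

Definition holds {X : Type} (rho : X -> X -> Prop) (f : pform) : Prop :=
  forall e : nat -> X, sat rho e f.

Definition P_equiv {X Y : Type} (rho : X -> X -> Prop) (sigma : Y -> Y -> Prop) : Prop :=
  forall f, sentence f -> (holds rho f <-> holds sigma f).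

Definition bijection {X Y : Type} (F : X -> Y) : Prop :=
  (forall x x', F x = F x' -> x = x') /\ (forall y, exists x, F x = y).

Definition condensable {X Y : Type} (rho : X -> X -> Prop) (sigma : Y -> Y -> Prop) : Prop :=
  exists F : X -> Y, bijection F /\ (forall x x', rho x x' -> sigma (F x) (F x')).

Definition cond_equiv {X Y : Type} (rho : X -> X -> Prop) (sigma : Y -> Y -> Prop) : Prop :=
  condensable rho sigma /\ condensable sigma rho.

Definition countably_infinite (X : Type) : Prop :=
  exists f : X -> nat, bijection f.

Definition singleton_class {X : Type} (rho : X -> X -> Prop) (x : X) : Prop :=
  forall y, rho x y -> y = x.

Definition infinitely_many {X : Type} (P : X -> Prop) : Prop :=
  ~ exists l : list X, forall x, P x -> In x l.

Definition class_size_ge {X : Type} (rho : X -> X -> Prop) (x : X) (n : nat) : Prop :=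
  exists l : list X, length l = n /\ NoDup l /\ forall y, In y l -> rho x y.

Definition class_finite {X : Type} (rho : X -> X -> Prop) (x : X) : Prop :=
  exists l : list X, forall y, rho x y -> In y l.

(* The class C. Since distinct singleton classes have distinct elements,
   "infinitely many singleton classes" = infinitely many x with class {x}. *)
Definition inC (X : Type) (rho : X -> X -> Prop) : Prop :=
  countably_infinite X /\ Equivalence rho /\
  infinitely_many (singleton_class rho) /\
  (forall n : nat, exists x, class_size_ge rho x n).

Definition inCfin (X : Type) (rho : X -> X -> Prop) : Prop :=
  inC X rho /\ forall x, class_finite rho x.

Definition inComega (X : Type) (rho : X -> X -> Prop) : Prop :=
  inC X rho /\ ~ inCfin X rho.

(* Main.v *)
Require Import Defs.
From Stdlib Require Import List Classes.RelationClasses.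
From Stdlib Require Import Classical ClassicalEpsilon Lia Arith.
Import ListNotations.

Lemma rm1 {T} (y : T) (l : list T) : NoDup l -> exists l', NoDup l' /\
  (forall z, In z l' -> In z l /\ z <> y) /\ length l <= S (length l').
Proof.
  induction l as [|a t IH]; intros Hn.
  - exists []. simpl. split; [constructor|]. split; [tauto|lia].
  - inversion Hn; subst. destruct (IH H2) as [t' [Hn' [Hin Hl]]].
    destruct (classic (a = y)) as [->|Hay].
    + exists t. split; [auto|]. split.
      * intros z Hz. split; [right; auto| intro; subst; contradiction].
      * simpl; lia.
    + exists (a :: t'). split; [|split].
      * constructor; auto. intro Ha. apply Hin in Ha. tauto.
      * intros z [<-|Hz]; [split; [left; auto| auto]|]. apply Hin in Hz. split; [right|]; tauto.
      * simpl. lia.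
Qed.

Lemma rmR {T} (R l : list T) : NoDup l -> exists l', NoDup l' /\
  (forall z, In z l' -> In z l /\ ~ In z R) /\ length l <= length l' + length R.
Proof.
  induction R as [|r R IH]; intros Hn.
  - exists l. split; [auto|split]; [simpl; tauto|simpl; lia].
  - destruct (IH Hn) as [l1 [Hn1 [Hi1 Hl1]]].
    destruct (rm1 r l1 Hn1) as [l2 [Hn2 [Hi2 Hl2]]].
    exists l2. split; [auto|split].
    + intros z Hz. split.
      { apply Hi2 in Hz as [Hz1 Hzr]. apply Hi1 in Hz1. tauto. } apply Hi2 in Hz as [Hz1 Hzr]. apply Hi1 in Hz1 as [Hzl HzR].
      intros [E|E]; [congruence| auto].
    + simpl. lia.
Qed.

Lemma filter_class {T} (P : T -> Prop) (l : list T) :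
  exists C, NoDup C /\ forall z, In z C <-> In z l /\ P z.
Proof.
  induction l as [|a t IH].
  - exists []. split; [constructor|]. simpl; tauto.
  - destruct IH as [C [HnC HC]].
    destruct (classic (P a /\ ~ In a C)) as [[Pa Na]|Hc].
    + exists (a :: C). split; [constructor; auto|].
      intros z; simpl; rewrite HC. split.
      * intros [<-|[H1 H2]]; tauto.
      * intros [[<-|H1] H2]; [left; auto| right; tauto].
    + exists C. split; auto. intros z; simpl; rewrite HC. split.
      * tauto.
      * intros [[<-|H1] H2]; [|tauto]. destruct (classic (In a C)) as [Hz|Hz].
        -- apply HC in Hz; tauto.
        -- exfalso; apply Hc; tauto.
Qed.

Lemma fresh_of {T} (P : T -> Prop) (D : list T) : infinitely_many P -> exists s, P s /\ ~ In s D.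
Proof. intros H. apply NNPP. intro Hn. apply H. exists D. intros x Px. apply NNPP. intro Hx. apply Hn. eauto. Qed.

Fixpoint depth (f : pform) : nat :=
  match f with
  | PAnd f g | POr f g => max (depth f) (depth g)
  | PAll _ f | PEx _ f => S (depth f)
  | _ => 0 end.

Definition Inv {X Y} (rho : X -> X -> Prop) (sigma : Y -> Y -> Prop) (q : nat) (vs : list nat)
  (e1 : nat -> X) (e2 : nat -> Y) : Prop :=
  (forall i j, In i vs -> In j vs -> (e1 i = e1 j <-> e2 i = e2 j)) /\
  (forall i j, In i vs -> In j vs -> rho (e1 i) (e1 j) -> sigma (e2 i) (e2 j)) /\
  exists y0 l, q <= length l /\ NoDup l /\
    (forall y, In y l -> sigma y0 y /\ forall j, In j vs -> e2 j <> y) /\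
    (forall i, In i vs -> singleton_class rho (e1 i) \/ sigma y0 (e2 i)).

Lemma upd_cases {X Y} (e1 : nat -> X) (e2 : nat -> Y) i x y vs j :
  In j (i :: vs) -> (upd e1 i x j = x /\ upd e2 i y j = y) \/
                    (In j vs /\ upd e1 i x j = e1 j /\ upd e2 i y j = e2 j).
Proof.
  unfold upd. destruct (Nat.eqb_spec j i) as [E|E]; [left; auto|].
  intros [H|H]; [congruence|right; auto].
Qed.

Lemma ext {X Y} (rho : X -> X -> Prop) (sigma : Y -> Y -> Prop) (Sr : Reflexive sigma)
  q vs e1 e2 i x y y0 l :
  (forall i j, In i vs -> In j vs -> (e1 i = e1 j <-> e2 i = e2 j)) ->
  (forall i j, In i vs -> In j vs -> rho (e1 i) (e1 j) -> sigma (e2 i) (e2 j)) ->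
  (forall i, In i vs -> singleton_class rho (e1 i) \/ sigma y0 (e2 i)) ->
  (forall j, In j vs -> (x = e1 j <-> y = e2 j)) ->
  (forall j, In j vs -> rho x (e1 j) -> sigma y (e2 j)) ->
  (forall j, In j vs -> rho (e1 j) x -> sigma (e2 j) y) ->
  (singleton_class rho x \/ sigma y0 y) ->
  q <= length l -> NoDup l ->
  (forall z, In z l -> sigma y0 z /\ (forall j, In j vs -> e2 j <> z) /\ y <> z) ->
  Inv rho sigma q (i :: vs) (upd e1 i x) (upd e2 i y).
Proof.
  intros H1 H2 Hs Hx1 Hx2 Hx3 Hx5 Hq Hn Hl.
  split; [|split].
  - intros a b Ha Hb.
    destruct (upd_cases e1 e2 i x y vs a Ha) as [[-> ->]|[Ha' [-> ->]]];
    destruct (upd_cases e1 e2 i x y vs b Hb) as [[-> ->]|[Hb' [-> ->]]].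
    + tauto.
    + apply Hx1; auto.
    + specialize (Hx1 a Ha'). split; intro E; symmetry; apply Hx1; symmetry; auto.
    + apply H1; auto.
  - intros a b Ha Hb.
    destruct (upd_cases e1 e2 i x y vs a Ha) as [[-> ->]|[Ha' [-> ->]]];
    destruct (upd_cases e1 e2 i x y vs b Hb) as [[-> ->]|[Hb' [-> ->]]].
    + intros _. apply Sr.
    + apply Hx2; auto.
    + apply Hx3; auto.
    + apply H2; auto.
  - exists y0, l. repeat split; auto.
    + apply Hl; auto.
    + intros j Hj. destruct (upd_cases e1 e2 i x y vs j Hj) as [[_ ->]|[Hj' [_ ->]]];
      apply Hl; auto.
    + intros a Ha. destruct (upd_cases e1 e2 i x y vs a Ha) as [[-> ->]|[Ha' [-> ->]]]; auto.
Qed.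

Lemma forth {X Y} (rho : X -> X -> Prop) (sigma : Y -> Y -> Prop)
  (Hr : Equivalence rho) (Hs : Equivalence sigma) q vs e1 e2 i x :
  Inv rho sigma (S q) vs e1 e2 -> exists y : Y, Inv rho sigma q (i :: vs) (upd e1 i x) (upd e2 i y).
Proof.
  intros [H1 [H2 [y0 [l [Hq [Hn [Hl Hsg]]]]]]].
  destruct Hr as [Rr Rs Rt]. destruct Hs as [Sr Ss St].
  destruct (classic (exists k, In k vs /\ e1 k = x)) as [[k [Hk <-]]|Hno].
  - exists (e2 k). apply ext with (y0 := y0) (l := l); auto; try lia.
    all: try (intros j Hj; apply H1; auto; fail).
    all: intros z Hz; destruct (Hl z Hz) as [A B]; split; [auto|split; auto].
  - destruct l as [|a t]; [simpl in Hq; lia|].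
    inversion Hn; subst.
    destruct (Hl a (or_introl eq_refl)) as [Ha0 Ha1].
    exists a. apply ext with (y0 := y0) (l := t); auto.
    + intros j Hj. split; intro E; exfalso.
      * apply Hno; eauto.
      * apply (Ha1 j Hj); auto.
    + intros j Hj Hrel. destruct (Hsg j Hj) as [Sg|Sg].
      * exfalso. apply Hno. exists j. split; auto. symmetry. apply Sg. apply Rs. auto.
      * eapply St; [apply Ss; exact Ha0| exact Sg].
    + intros j Hj Hrel. destruct (Hsg j Hj) as [Sg|Sg].
      * exfalso. apply Hno. exists j. split; auto. symmetry. apply Sg. auto.
      * eapply St; [apply Ss; exact Sg| exact Ha0].
    + simpl in Hq; lia.
    + intros z Hz. destruct (Hl z (or_intror Hz)) as [A B]. repeat split; auto.
      intro E; subst; contradiction.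
Qed.

Lemma back {X Y} (rho : X -> X -> Prop) (sigma : Y -> Y -> Prop)
  (Hr : Equivalence rho) (Hs : Equivalence sigma) (HS : infinitely_many (singleton_class rho))
  q vs e1 e2 i y :
  Inv rho sigma (S q) vs e1 e2 -> exists x : X, Inv rho sigma q (i :: vs) (upd e1 i x) (upd e2 i y).
Proof.
  intros [H1 [H2 [y0 [l [Hq [Hn [Hl Hsg]]]]]]].
  destruct Hr as [Rr Rs Rt]. destruct Hs as [Sr Ss St].
  destruct (classic (exists k, In k vs /\ e2 k = y)) as [[k [Hk <-]]|Hno].
  - exists (e1 k). apply ext with (y0 := y0) (l := l); auto; try lia.
    all: try (intros j Hj; apply H1; auto; fail).
    all: intros z Hz; destruct (Hl z Hz) as [A B]; split; [auto|split; auto].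
  - destruct (fresh_of _ (map e1 vs) HS) as [s [Ss1 Ss2]].
    destruct (rm1 y l Hn) as [l' [Hn' [Hi' Hl']]].
    exists s. apply ext with (y0 := y0) (l := l'); auto.
    + intros j Hj. split; intro E; exfalso.
      * apply Ss2. subst. apply in_map; auto.
      * apply Hno; eauto.
    + intros j Hj Hrel. exfalso. apply Ss2. rewrite <- (Ss1 _ Hrel). apply in_map; auto.
    + intros j Hj Hrel. exfalso. apply Ss2. rewrite <- (Ss1 _ (Rs _ _ Hrel)). apply in_map; auto.
    + simpl in Hq; lia.
    + intros z Hz. destruct (Hi' z Hz) as [Hz1 Hz2]. destruct (Hl z Hz1) as [A B].
      repeat split; auto.
Qed.

Lemma transfer_gen {X Y} (rho : X -> X -> Prop) (sigma : Y -> Y -> Prop)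
  (Hr : Equivalence rho) (Hs : Equivalence sigma) (HS : infinitely_many (singleton_class rho))
  (f : pform) : forall q vs e1 e2, depth f <= q -> (forall k, free_in k f -> In k vs) ->
  Inv rho sigma q vs e1 e2 -> sat rho e1 f -> sat sigma e2 f.
Proof.
  induction f as [i j|i j|i j|f IHf g IHg|f IHf g IHg|i f IHf|i f IHf];
    intros q vs e1 e2 Hd Hfr HI; simpl in *.
  - destruct HI as [H1 _]. apply H1; auto.
  - destruct HI as [_ [H2 _]]. apply H2; auto.
  - destruct HI as [H1 _]. intros E E'. apply E. apply H1; auto.
  - intros [A B]. split; [eapply IHf|eapply IHg]; try exact HI; try eassumption; try lia; intros k Hk; apply Hfr; auto.
  - intros [A|B]; [left; eapply IHf|right; eapply IHg]; try exact HI; try eassumption; try lia; intros k Hk; apply Hfr; auto.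
  - destruct q as [|q]; [lia|]. intros Hall y.
    destruct (back rho sigma Hr Hs HS q vs e1 e2 i y HI) as [x Hx].
    eapply IHf with (q := q) (vs := i :: vs); eauto; try lia.
    intros k Hk. destruct (Nat.eq_dec k i); [left; auto| right; auto].
  - destruct q as [|q]; [lia|]. intros [x Hx].
    destruct (forth rho sigma Hr Hs q vs e1 e2 i x HI) as [y Hy].
    exists y. eapply IHf with (q := q) (vs := i :: vs); eauto; try lia.
    intros k Hk. destruct (Nat.eq_dec k i); [left; auto| right; auto].
Qed.

Lemma enum_of {X} : countably_infinite X -> exists g : nat -> X, forall x, exists n, g n = x.
Proof.
  intros [f [fi fs]].
  exists (fun n => proj1_sig (constructive_indefinite_description _ (fs n))).
  intros x. exists (f x).
  destruct (constructive_indefinite_description _ (fs (f x))) as [z Hz]. simpl. apply fi; auto.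
Qed.

Lemma transfer {X Y} (rho : X -> X -> Prop) (sigma : Y -> Y -> Prop) f :
  inC X rho -> inC Y sigma -> sentence f -> holds rho f -> holds sigma f.
Proof.
  intros [cX [eX [sX _]]] [_ [eY [_ bY]]] Hf Hh e2.
  destruct (enum_of cX) as [g _].
  destruct (bY (depth f)) as [y0 [l [Hlen [Hn Hl]]]].
  apply (transfer_gen rho sigma eX eY sX f (depth f) [] (fun _ => g 0) e2).
  - lia.
  - intros k Hk. exfalso. apply (Hf k Hk).
  - split; [|split]; simpl; try tauto.
    exists y0, l. split; [lia|split; [auto|split]].
    + intros y Hy. split; [apply Hl; auto| simpl; tauto].
    + simpl; tauto.
  - apply Hh.
Qed.

Definition pfunc {X Y} (p : list (X*Y)) := forall x y y', In (x,y) p -> In (x,y') p -> y = y'.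
Definition pinj {X Y} (p : list (X*Y)) := forall x x' y, In (x,y) p -> In (x',y) p -> x = x'.
Definition phom {X Y} (rho : X -> X -> Prop) (sigma : Y -> Y -> Prop) (p : list (X*Y)) :=
  forall x y x' y', In (x,y) p -> In (x',y') p -> rho x x' -> sigma y y'.

Lemma BF {X Y} (rho : X -> X -> Prop) (sigma : Y -> Y -> Prop) (G : list (X*Y) -> Prop)
  (eX : nat -> X) (eY : nat -> Y) :
  (forall x, exists n, eX n = x) -> (forall y, exists n, eY n = y) ->
  G [] ->
  (forall p, G p -> forall x, exists p', G p' /\ incl p p' /\ exists y, In (x,y) p') ->
  (forall p, G p -> forall y, exists p', G p' /\ incl p p' /\ exists x, In (x,y) p') ->
  (forall p, G p -> pfunc p /\ pinj p /\ phom rho sigma p) ->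
  condensable rho sigma.
Proof.
  intros SX SY G0 Fo Ba Gp.
  assert (fwd : forall (gp : {p | G p}) (x : X), {gp' : {p | G p} |
     incl (proj1_sig gp) (proj1_sig gp') /\ exists y, In (x,y) (proj1_sig gp')}).
  { intros [p Hp] x. apply constructive_indefinite_description.
    destruct (Fo p Hp x) as [p' [Hp' [Hi Hy]]]. exists (exist _ p' Hp'). simpl. auto. }
  assert (bwd : forall (gp : {p | G p}) (y : Y), {gp' : {p | G p} |
     incl (proj1_sig gp) (proj1_sig gp') /\ exists x, In (x,y) (proj1_sig gp')}).
  { intros [p Hp] y. apply constructive_indefinite_description.
    destruct (Ba p Hp y) as [p' [Hp' [Hi Hy]]]. exists (exist _ p' Hp'). simpl. auto. }
  pose (sq := fix sq (n : nat) : {p | G p} := match n with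
     | 0 => exist _ [] G0
     | S m => proj1_sig (bwd (proj1_sig (fwd (sq m) (eX m))) (eY m)) end).
  pose (s := fun n => proj1_sig (sq n)).
  assert (HG : forall n, G (s n)) by (intro n; exact (proj2_sig (sq n))).
  assert (Hstep : forall m, incl (s m) (s (S m)) /\ (exists y, In (eX m, y) (s (S m)))
                            /\ (exists x, In (x, eY m) (s (S m)))).
  { intro m. unfold s. cbn [sq].
    destruct (fwd (sq m) (eX m)) as [g1 [Hi1 Hy1]]. cbn.
    destruct (bwd g1 (eY m)) as [g2 [Hi2 Hy2]]. cbn.
    split; [|split].
    - intros a Ha. apply Hi2, Hi1, Ha.
    - destruct Hy1 as [y Hy]. exists y. apply Hi2, Hy.
    - exact Hy2. }
  assert (Hmono : forall n m, n <= m -> incl (s n) (s m)).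
  { intros n m Hnm. induction Hnm; [apply incl_refl|].
    intros a Ha. apply (proj1 (Hstep m)). apply IHHnm, Ha. }
  assert (Hmax : forall a b n m, In a (s n) -> In b (s m) ->
            In a (s (max n m)) /\ In b (s (max n m))).
  { intros a b n m Ha Hb. split; [apply (Hmono n)|apply (Hmono m)]; auto; lia. }
  assert (Hdom : forall x, exists y, exists n, In (x,y) (s n)).
  { intros x. destruct (SX x) as [n <-]. destruct (proj1 (proj2 (Hstep n))) as [y Hy]. eauto. }
  exists (fun x => proj1_sig (constructive_indefinite_description _ (Hdom x))).
  split; [split|].
  - intros x x' E.
    destruct (constructive_indefinite_description _ (Hdom x)) as [y [n Hn]].
    destruct (constructive_indefinite_description _ (Hdom x')) as [y' [n' Hn']].
    cbn in E. subst y'.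
    destruct (Hmax _ _ _ _ Hn Hn') as [A B].
    destruct (Gp _ (HG (max n n'))) as [_ [Hi _]]. eapply Hi; eauto.
  - intros y. destruct (SY y) as [n <-]. destruct (proj2 (proj2 (Hstep n))) as [x Hx].
    exists x. destruct (constructive_indefinite_description _ (Hdom x)) as [y' [n' Hn']].
    cbn. destruct (Hmax _ _ _ _ Hn' Hx) as [A B].
    destruct (Gp _ (HG (max n' (S n)))) as [Hf _]. eapply Hf; eauto.
  - intros x x' Hr.
    destruct (constructive_indefinite_description _ (Hdom x)) as [y [n Hn]].
    destruct (constructive_indefinite_description _ (Hdom x')) as [y' [n' Hn']].
    cbn. destruct (Hmax _ _ _ _ Hn Hn') as [A B].
    destruct (Gp _ (HG (max n n'))) as [_ [_ Hh]]. eapply Hh; eauto.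
Qed.

Lemma pairing {X Y} (C : list X) : NoDup C -> forall (L : list Y), NoDup L -> length C <= length L ->
  exists q : list (X*Y), (forall a b, In (a,b) q -> In a C /\ In b L) /\
    (forall a, In a C -> exists b, In (a,b) q) /\ pfunc q /\ pinj q.
Proof.
  induction C as [|a C IH]; intros HC L HL Hlen.
  - exists []. split; [simpl; tauto|split; [simpl; tauto|split; intros ? ? ? []]].
  - destruct L as [|b L]; [simpl in Hlen; lia|].
    inversion HC; subst. inversion HL; subst.
    destruct (IH H2 L H4 ltac:(simpl in Hlen; lia)) as [q [Hq1 [Hq2 [Hq3 Hq4]]]].
    exists ((a,b)::q). split; [|split; [|split]].
    + intros a0 b0 [E|E].
      * injection E as -> ->. simpl; auto.
      * apply Hq1 in E; simpl; tauto.
    + intros a0 [<-|Ha]. exists b; left; auto. destruct (Hq2 a0 Ha) as [b0 Hb]; exists b0; right; auto.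
    + unfold pfunc; simpl. intros x y y' [E|E] [E'|E'].
      * inversion E; inversion E'; subst; auto.
      * injection E as -> ->. apply Hq1 in E'. tauto.
      * injection E' as -> ->. apply Hq1 in E. tauto.
      * eapply Hq3; eauto.
    + unfold pinj; simpl. intros x x' y [E|E] [E'|E'].
      * inversion E; inversion E'; subst; auto.
      * injection E as -> ->. apply Hq1 in E'. tauto.
      * injection E' as -> ->. apply Hq1 in E. tauto.
      * eapply Hq4; eauto.
Qed.

Lemma cond_om {X Y} (rho : X -> X -> Prop) (sigma : Y -> Y -> Prop) :
  inC X rho -> inComega Y sigma -> condensable rho sigma.
Proof.
  intros HX [HYc HnY].
  assert (Hys : exists ys, ~ class_finite sigma ys).
  { apply NNPP. intro H. apply HnY. split; [exact HYc|].
    intros y; apply NNPP; intro; apply H; eauto. }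
  destruct Hys as [ys Hys].
  destruct HX as [cX [[Rr Rs Rt] [sX _]]]. destruct HYc as [cY [[Sr Ss St] _]].
  destruct (enum_of cX) as [eX SX]. destruct (enum_of cY) as [eY SY].
  apply (BF rho sigma (fun p => pfunc p /\ pinj p /\
      forall x y, In (x,y) p -> singleton_class rho x \/ sigma ys y) eX eY SX SY).
  - unfold pfunc, pinj; simpl; tauto.
  - intros p [Hf [Hi Hk]] x.
    destruct (classic (exists y, In (x,y) p)) as [Hin|Hno].
    + exists p. split; [split; auto|split; [apply incl_refl|auto]].
    + destruct (fresh_of (sigma ys) (map snd p) Hys) as [y [Hy1 Hy2]].
      exists ((x,y)::p). split; [split; [|split]|split; [apply incl_tl, incl_refl|exists y; left; auto]].
      * unfold pfunc; simpl. intros a b b' [E|E] [E'|E'].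
        -- inversion E; inversion E'; subst; auto.
        -- injection E as -> ->. exfalso; apply Hno; eauto.
        -- injection E' as -> ->. exfalso; apply Hno; eauto.
        -- eapply Hf; eauto.
      * unfold pinj; simpl. intros a a' b [E|E] [E'|E'].
        -- inversion E; inversion E'; subst; auto.
        -- injection E as -> ->. exfalso; apply Hy2. apply (in_map snd) in E'. exact E'.
        -- injection E' as -> ->. exfalso; apply Hy2. apply (in_map snd) in E. exact E.
        -- eapply Hi; eauto.
      * intros a b [E|E]; [injection E as -> ->; right; auto| apply Hk; auto].
  - intros p [Hf [Hi Hk]] y.
    destruct (classic (exists x, In (x,y) p)) as [Hin|Hno].
    + exists p. split; [split; auto|split; [apply incl_refl|auto]].
    + destruct (fresh_of _ (map fst p) sX) as [x [Hx1 Hx2]].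
      exists ((x,y)::p). split; [split; [|split]|split; [apply incl_tl, incl_refl|exists x; left; auto]].
      * unfold pfunc; simpl. intros a b b' [E|E] [E'|E'].
        -- inversion E; inversion E'; subst; auto.
        -- injection E as -> ->. exfalso; apply Hx2. apply (in_map fst) in E'. exact E'.
        -- injection E' as -> ->. exfalso; apply Hx2. apply (in_map fst) in E. exact E.
        -- eapply Hf; eauto.
      * unfold pinj; simpl. intros a a' b [E|E] [E'|E'].
        -- inversion E; inversion E'; subst; auto.
        -- injection E as -> ->. exfalso; apply Hno; eauto.
        -- injection E' as -> ->. exfalso; apply Hno; eauto.
        -- eapply Hi; eauto.
      * intros a b [E|E]; [injection E as -> ->; left; auto| apply Hk; auto].
  - intros p [Hf [Hi Hk]]. split; [auto|split; [auto|]].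
    intros x y x' y' H1 H2 Hr.
    destruct (classic (x = x')) as [<-|Hne].
    + rewrite (Hf _ _ _ H1 H2). apply Sr.
    + destruct (Hk _ _ H1) as [S1|S1]; [exfalso; apply Hne; symmetry; apply S1; auto|].
      destruct (Hk _ _ H2) as [S2|S2]; [exfalso; apply Hne; apply S2; apply Rs; auto|].
      eapply St; [apply Ss; exact S1|exact S2].
Qed.

Lemma cond_finX {X Y} (rho : X -> X -> Prop) (sigma : Y -> Y -> Prop) :
  inCfin X rho -> inC Y sigma -> condensable rho sigma.
Proof.
  intros [[cX [[Rr Rs Rt] [sX _]]] Hfin] [cY [[Sr Ss St] [_ bY]]].
  destruct (enum_of cX) as [eX SX]. destruct (enum_of cY) as [eY SY].
  apply (BF rho sigma (fun p => pfunc p /\ pinj p /\ phom rho sigma p /\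
      forall x y z, In (x,y) p -> rho x z -> exists w, In (z,w) p) eX eY SX SY).
  - unfold pfunc, pinj, phom; simpl; tauto.
  - intros p [Hf [Hi [Hh Hc]]] x.
    destruct (classic (exists y, In (x,y) p)) as [Hin|Hno].
    + exists p. split; [split; auto|split; [apply incl_refl|auto]].
    + destruct (Hfin x) as [l0 Hl0].
      destruct (filter_class (rho x) l0) as [C [HnC HC]].
      assert (HC' : forall z, In z C <-> rho x z).
      { intro z. rewrite HC. split; [tauto|]. intro H; split; auto. }
      assert (Hdisj : forall z w, In z C -> In (z,w) p -> False).
      { intros z w Hz Hzw. apply HC' in Hz. apply Hno. eapply Hc; eauto. }
      destruct (bY (length C + length (map snd p))) as [y0 [l1 [Hl1 [Hn1 Hr1]]]].
      destruct (rmR (map snd p) l1 Hn1) as [L [HnL [HiL HlL]]].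
      destruct (pairing C HnC L HnL ltac:(lia)) as [q [Hq1 [Hq2 [Hq3 Hq4]]]].
      assert (HqL : forall a b, In (a,b) q -> rho x a /\ sigma y0 b /\ ~ In b (map snd p)).
      { intros a b Hab. destruct (Hq1 a b Hab) as [Ha Hb]. apply HiL in Hb as [Hb1 Hb2].
        split; [apply HC'; auto|split; [apply Hr1; auto|auto]]. }
      exists (q ++ p). split; [split; [|split; [|split]]|split].
      * unfold pfunc. intros a b b' H1 H2. apply in_app_iff in H1, H2.
        destruct H1 as [H1|H1]; destruct H2 as [H2|H2].
        -- eapply Hq3; eauto.
        -- exfalso. apply (Hdisj a b'); auto. apply HC'. apply (HqL _ _ H1).
        -- exfalso. apply (Hdisj a b); auto. apply HC'. apply (HqL _ _ H2).
        -- eapply Hf; eauto.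
      * unfold pinj. intros a a' b H1 H2. apply in_app_iff in H1, H2.
        destruct H1 as [H1|H1]; destruct H2 as [H2|H2].
        -- eapply Hq4; eauto.
        -- exfalso. apply (HqL _ _ H1). apply (in_map snd) in H2. exact H2.
        -- exfalso. apply (HqL _ _ H2). apply (in_map snd) in H1. exact H1.
        -- eapply Hi; eauto.
      * unfold phom. intros a b a' b' H1 H2 Hr. apply in_app_iff in H1, H2.
        destruct H1 as [H1|H1]; destruct H2 as [H2|H2].
        -- destruct (HqL _ _ H1) as [_ [S1 _]]. destruct (HqL _ _ H2) as [_ [S2 _]].
           eapply St; [apply Ss; exact S1|exact S2].
        -- exfalso. destruct (HqL _ _ H1) as [Ra _].
           destruct (Hc _ _ _ H2 (Rs _ _ Hr)) as [w Hw].
           apply Hno. eapply Hc; [exact Hw|]. apply Rs; exact Ra.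
        -- exfalso. destruct (HqL _ _ H2) as [Ra _].
           destruct (Hc _ _ _ H1 Hr) as [w Hw].
           apply Hno. eapply Hc; [exact Hw|]. apply Rs; exact Ra.
        -- eapply Hh; eauto.
      * intros a b z H1 Hr. apply in_app_iff in H1. destruct H1 as [H1|H1].
        -- destruct (HqL _ _ H1) as [Ra _].
           destruct (Hq2 z) as [w Hw]; [apply HC'; eapply Rt; eauto|].
           exists w. apply in_app_iff; left; auto.
        -- destruct (Hc _ _ _ H1 Hr) as [w Hw]. exists w. apply in_app_iff; right; auto.
      * intros a Ha. apply in_app_iff; right; auto.
      * destruct (Hq2 x) as [w Hw]; [apply HC'; apply Rr|]. exists w. apply in_app_iff; left; auto.
  - intros p [Hf [Hi [Hh Hc]]] y.
    destruct (classic (exists x, In (x,y) p)) as [Hin|Hno].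
    + exists p. split; [split; auto|split; [apply incl_refl|auto]].
    + destruct (fresh_of _ (map fst p) sX) as [s [Hs1 Hs2]].
      assert (Hs3 : forall w, ~ In (s,w) p).
      { intros w Hw. apply Hs2. apply (in_map fst) in Hw. exact Hw. }
      exists ((s,y)::p). split; [split; [|split; [|split]]|split; [apply incl_tl, incl_refl|exists s; left; auto]].
      * unfold pfunc; simpl. intros a b b' [E|E] [E'|E'].
        -- inversion E; inversion E'; subst; auto.
        -- inversion E; subst. exfalso; eapply Hs3; eauto.
        -- inversion E'; subst. exfalso; eapply Hs3; eauto.
        -- eapply Hf; eauto.
      * unfold pinj; simpl. intros a a' b [E|E] [E'|E'].
        -- inversion E; inversion E'; subst; auto.
        -- inversion E; subst. exfalso; apply Hno; eauto.
        -- inversion E'; subst. exfalso; apply Hno; eauto.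
        -- eapply Hi; eauto.
      * unfold phom; simpl. intros a b a' b' [E|E] [E'|E'] Hr.
        -- inversion E; inversion E'; subst; apply Sr.
        -- inversion E; subst. exfalso. apply Hs1 in Hr. subst. eapply Hs3; eauto.
        -- inversion E'; subst. exfalso. apply Rs, Hs1 in Hr. subst. eapply Hs3; eauto.
        -- eapply Hh; eauto.
      * simpl. intros a b z [E|E] Hr.
        -- inversion E; subst. apply Hs1 in Hr. subst. eexists; left; reflexivity.
        -- destruct (Hc _ _ _ E Hr) as [w Hw]. exists w; right; auto.
  - intros p [Hf [Hi [Hh Hc]]]. auto.
Qed.

Lemma pre_list {X Y} (F : X -> Y) : (forall y, exists x, F x = y) ->
  forall l, exists l', forall y, In y l -> exists z, In z l' /\ F z = y.
Proof.
  intros Fs l. induction l as [|a t [t' IH]].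
  - exists []. simpl; tauto.
  - destruct (Fs a) as [z Hz]. exists (z :: t'). intros y [<-|Hy].
    + exists z; split; [left|]; auto.
    + destruct (IH y Hy) as [w [Hw E]]. exists w; split; [right|]; auto.
Qed.

Lemma cond_fin {X Y} (rho : X -> X -> Prop) (sigma : Y -> Y -> Prop) :
  condensable rho sigma -> (forall y, class_finite sigma y) -> forall x, class_finite rho x.
Proof.
  intros [F [[Fi Fs] Fh]] Hy x.
  destruct (Hy (F x)) as [l Hl].
  destruct (pre_list F Fs l) as [l' Hl'].
  exists l'. intros x' Hr. destruct (Hl' (F x') (Hl _ (Fh _ _ Hr))) as [z [Hz E]].
  apply Fi in E. subst; auto.
Qed.

Lemma condb {X Y} (rho : X -> X -> Prop) (sigma : Y -> Y -> Prop) :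
  inC X rho -> inC Y sigma ->
  (condensable rho sigma <-> inCfin X rho \/ inComega Y sigma).
Proof.
  intros HX HY. split.
  - intros Hc. destruct (classic (inCfin X rho)) as [H|H]; [left; auto|right].
    split; auto. intros [_ HfY]. apply H. split; auto. apply (cond_fin rho sigma Hc HfY).
  - intros [H|H]; [apply cond_finX; auto|apply cond_om; auto].
Qed.

Theorem claim6p1 :
  forall (X Y : Type) (rho : X -> X -> Prop) (sigma : Y -> Y -> Prop),
    inC X rho -> inC Y sigma ->
    P_equiv rho sigma /\
    (condensable rho sigma <-> inCfin X rho \/ inComega Y sigma) /\
    (cond_equiv rho sigma <->
       (inCfin X rho /\ inCfin Y sigma) \/ (inComega X rho /\ inComega Y sigma)).
Proof.
  intros X Y rho sigma HX HY.
  split; [|split].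
  - intros f Hf. split; apply transfer; auto.
  - apply condb; auto.
  - unfold cond_equiv. rewrite (condb rho sigma HX HY), (condb sigma rho HY HX).
    unfold inComega.
    destruct (classic (inCfin X rho)); destruct (classic (inCfin Y sigma)); tauto.
Qed.
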